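(* For any two predicates $P,Q$ and any concrete program $S$ (a program of the quantum while language containing no holes), if $\{P\}\,\square\,\{Q\}\hookrightarrow_{\mathrm{par}}^{*} S$, then $\models_{\mathrm{par}}\{P\}\,S\,\{Q\}$.
   Context: Quantum setting. There is a finite set $\mathrm{qVars}$ of quantum variables; each $q$ has Hilbert space $\mathcal H_q=\mathbb C^{\Sigma_q}$ ($\Sigma_q$ finite) with standard orthonormal basis $\{|x\rangle\}_{x\in\Sigma_q}$. For a set $\vec q\subseteq\mathrm{qVars}$, $\mathcal H_{\vec q}=\bigotimes_{q\in\vec q}\mathcal H_q$ with standard basis labelled by $\Sigma_{\vec q}=\prod_{q\in\vec q}\Sigma_q$, and $\mathcal H=\mathcal H_{\mathrm{qVars}}$. For an operator $A$ on $\mathcal H_{\vec q}$, $A_{\vec q}=A\otimes I$ on $\mathcal H$. $\preceq$ is the Löwner order. A partial state is a positive semidefinite (PSD) $\rho$ on $\mathcal H$ with $\operatorname{tr}\rho\le1$. A predicate is an operator $P$ on $\mathcal H$ with $0\preceq P\preceq I$; ''$P\Rightarrow Q$'' means $P\preceq Q$. A measurement on $\vec q$ is a family $\vec M=\{M_\omega\}_{\omega\in\Omega}$ ($\Omega$ finite) of PSD operators on $\mathcal H_{\vec q}$ with $\sum_\omega M_\omega=I$; write $\mathcal M_{\omega}(X)=\sqrt{M_{\omega,\vec q}}\,X\,\sqrt{M_{\omega,\vec q}}$. A binary measurement is given by an operator $B$ on $\mathcal H_{\vec q}$ with $0\preceq B\preceq I$, and $\mathcal B_{0,\vec q}(X)=\sqrt{(I-B)_{\vec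 q}}\,X\sqrt{(I-B)_{\vec q}}$, $\mathcal B_{1,\vec q}(X)=\sqrt{B_{\vec q}}\,X\sqrt{B_{\vec q}}$. Quantum while language: $S::=\mathbf{skip}\mid \vec q:=|0\rangle\mid \vec q\mathrel{*}=U\mid S_1;S_2\mid \mathbf{repeat}\ N\ \mathbf{do}\ S\mid \mathbf{case}\ \vec M[\vec q]\ \mathbf{of}\ \{\omega: S_\omega\}_{\omega\in\Omega}\mid \mathbf{while}\ B[\vec q]\ \mathbf{do}\ S$, with $U$ unitary on $\mathcal H_{\vec q}$, $N\in\mathbb N$. Denotational semantics $[\![S]\!]$ on partial states: $[\![\mathbf{skip}]\!](\rho)=\rho$; $[\![\vec q:=|0\rangle]\!](\rho)=\sum_{x\in\Sigma_{\vec q}}|0\rangle\langle x|_{\vec q}\,\rho\,|x\rangle\langle0|_{\vec q}$; $[\![\vec q\mathrel{*}=U]\!](\rho)=U_{\vec q}\rho U_{\vec q}^\dagger$; $[\![S_1;S_2]\!]=[\![S_2]\!]\circ[\![S_1]\!]$; $[\![\mathbf{repeat}\ N\ \mathbf{do}\ S]\!]=[\![S]\!]^N$; $[\![\mathbf{case}\ldots]\!](\rho)=\sum_\omega[\![S_\omega]\!](\mathcal M_\omega(\rho))$; $[\![\mathbf{while}\ B[\vec q]\ \mathbf{do}\ S]\!](\rho)=\sum_{k\ge0}(\mathcal B_{0,\vec q}\circ([\![S]\!]\circ\mathcal B_{1,\vec q})^k)(\rho)$. Hoare triples: $\models_{\mathrm{tot}}\{P\}S\{Q\}$ iff $\operatorname{tr}(P\rho)\le\operatorname{tr}(Q[\![S]\!](\rho))$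 for all partial states $\rho$; $\models_{\mathrm{par}}\{P\}S\{Q\}$ iff $\operatorname{tr}(P\rho)\le\operatorname{tr}(Q[\![S]\!](\rho))+\operatorname{tr}\rho-\operatorname{tr}[\![S]\!](\rho)$ for all partial states $\rho$. Syntactic sugar: $\mathbf{if}\ B[\vec q]\ \mathbf{then}\ S_1\ \mathbf{else}\ S_0$ abbreviates $\mathbf{case}\ \{1:B,0:I-B\}[\vec q]\ \mathbf{of}\ \{1:S_1,0:S_0\}$; omitting else means $S_0=\mathbf{skip}$. Programs with holes. The grammar is extended by holes $\{P\}\,\square\,\{Q\}$ ($P,Q$ predicates); more generally a hole may carry a family of specifications $\{P_\lambda\}\,\square\,\{Q_\lambda\}$, $\lambda\in\Lambda$ (written e.g. $\{P,P'\}\square\{Q,Q'\}$ for two). A program without holes is concrete. A refinement rule applied to a hole with a family must have its side conditions satisfied for every $\lambda$; the predicates it introduces may depend on $\lambda$, but the syntactic program produced (variables, unitaries, measurements, $N$, $B$) is the same for all $\lambda$; holes it creates carry the families indexed by $\lambda$ together with any newly introduced index. Refinement for partial correctness $\hookrightarrow_{\mathrm{par}}$ (for predicates $P,Q$): (H.skip) $\{P\}\square\{Q\}\hookrightarrow\mathbf{skip}$ if $P\Rightarrow Q$; (H.init) $\{P\}\square\{Q\}\hookrightarrow\vec q:=|0\rangle$ if $P\Rightarrow\sum_{x\in\Sigma_{\vec q}}|x\rangle\langle0|_{\vec q}Q|0\rangle\langle x|_{\vec q}$; (H.unit) $\{P\}\square\{Q\}\hookrightarrow\vec q\mathrel{*}=U$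 if $P\Rightarrow U_{\vec q}^\dagger QU_{\vec q}$; (H.seq) $\{P\}\square\{Q\}\hookrightarrow\{P\}\square\{R\};\{R\}\square\{Q\}$ for any predicate $R$; (HP.split) $\{P\}\square\{Q\}\hookrightarrow\{P_\gamma\}\square\{Q_\gamma\}$ ($\gamma\in\Gamma$) if $P\Rightarrow\sum_\gamma p_\gamma P_\gamma$ and $\sum_\gamma p_\gamma Q_\gamma\Rightarrow Q$ for a probability distribution $(p_\gamma)$; (H.repeat) $\{P\}\square\{Q\}\hookrightarrow\mathbf{repeat}\ N\ \mathbf{do}\ \{R_j\}\square\{R_{j+1}\}$ (family over $j\in\{0,\dots,N-1\}$) for predicates $R_0,\dots,R_N$ with $P\Rightarrow R_0$, $R_N\Rightarrow Q$; (H.case) $\{P\}\square\{Q\}\hookrightarrow\mathbf{case}\ \vec M[\vec q]\ \mathbf{of}\ \{\omega:\{P_\omega\}\square\{Q\}\}_{\omega}$ if $P\Rightarrow\sum_\omega\mathcal M_\omega(P_\omega)$; (HP.while) $\{P\}\square\{Q\}\hookrightarrow\mathbf{while}\ B[\vec q]\ \mathbf{do}\ \{R\}\square\{\mathcal B_{0,\vec q}(Q)+\mathcal B_{1,\vec q}(R)\}$ for a predicate $R$ with $P\Rightarrow\mathcal B_{0,\vec q}(Q)+\mathcal B_{1,\vec q}(R)$. Composite rules: (C.seqL/C.seqR/C.repeat/C.case/C.while) if $S'\hookrightarrow S$ then replacing one occurrence of $S'$ as the left or right component of a sequence, the body of a repeat, one branch of a case, or the body of a while by $S$ is a refinement step.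 Refinement for total correctness $\hookrightarrow_{\mathrm{tot}}$ uses all (H.* ) and (C.* ) rules above but replaces (HP.while) by (HT.while): $\{P\}\square\{Q\}\hookrightarrow\mathbf{while}\ B[\vec q]\ \mathbf{do}\ \{R_{n+1}\}\square\{\mathcal B_{0,\vec q}(Q)+\mathcal B_{1,\vec q}(R_n)\}$ (family over $n\in\mathbb N$) for predicates $(R_n)_{n\in\mathbb N}$ with $R_0=0$, $R_n\Rightarrow R_{n+1}$, whose limit $R=\lim_n R_n$ satisfies $P\Rightarrow\mathcal B_{0,\vec q}(Q)+\mathcal B_{1,\vec q}(R)$; and replaces (HP.split) by (HT.split), identical except that $(p_\gamma)$ need only be nonnegative reals. $\hookrightarrow^k$ denotes $k$ steps and $\hookrightarrow^*$ the reflexive-transitive closure. *)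

(* Defs.v *)
From HB Require Import structures.
From mathcomp Require Import all_boot all_order all_algebra.
From mathcomp Require Import complex spectral.
From mathcomp Require Import classical_sets filter reals topology normedtype sequences.
From Stdlib Require Import ClassicalEpsilon.
Import Order.TTheory GRing.Theory Num.Theory.
Import numFieldNormedType.Exports.

Set Implicit Arguments.
Unset Strict Implicit.
Unset Printing Implicit Defensive.

Local Open Scope ring_scope.
Local Open Scope sesquilinear_scope.

(* The finite set qVars of quantum variables is a finType V; variable q has  *)
(* classical state space Sigma_q = 'I_(d q).+1, whose element ord0 is the     *)
(* basis label "0" used by initialisation.                                    *)

(* standard basis labels of the whole system H = H_qVars *)
Definition gidx (V : finType) (d : V -> nat) : finType :=
  {dffun forall v : V, 'I_(d v).+1}.

(* standard basis labels of H_vq, for a set vq of variables *)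
Definition lidx (V : finType) (d : V -> nat) (vq : {set V}) : finType :=
  {dffun forall v : {x : V | x \in vq}, 'I_(d (sval v)).+1}.

(* operators on a Hilbert space with standard basis labelled by T *)
Definition op (R : realType) (T : finType) := 'M[R[i]]_#|T|.

Definition gop (R : realType) (V : finType) (d : V -> nat) := op R (gidx d).
Definition lop (R : realType) (V : finType) (d : V -> nat) (vq : {set V}) :=
  op R (lidx d vq).

Definition restr (V : finType) (d : V -> nat) (vq : {set V}) (x : gidx d)
  : lidx d vq := [ffun v => x (sval v)].

(* A_vq = A (x) I on H, for A an operator on H_vq *)
Definition lift (R : realType) (V : finType) (d : V -> nat) (vq : {set V})
    (A : lop R d vq) : gop R d :=
  \matrix_(i, j)
    (let x : gidx d := enum_val i in let y : gidx d := enum_val j in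
     if [forall v, (v \notin vq) ==> (x v == y v)]
     then A (enum_rank (restr vq x)) (enum_rank (restr vq y))
     else 0).

Definition ketbra (R : realType) (V : finType) (d : V -> nat) (vq : {set V})
    (x y : lidx d vq) : lop R d vq :=
  delta_mx (enum_rank x) (enum_rank y).

Definition lzero (V : finType) (d : V -> nat) (vq : {set V}) : lidx d vq :=
  [ffun v => ord0].

Definition psd (R : realType) (n : nat) (A : 'M[R[i]]_n) : Prop :=
  forall u : 'cV[R[i]]_n, 0 <= (u ^t* *m A *m u) ord0 ord0.

Definition lowner (R : realType) (n : nat) (A B : 'M[R[i]]_n) : Prop :=
  psd (B - A).

Definition is_pred (R : realType) (n : nat) (P : 'M[R[i]]_n) : Prop :=
  psd P /\ lowner P 1%:M.

Definition pstate (R : realType) (n : nat) (rho : 'M[R[i]]_n) : Prop :=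
  psd rho /\ \tr rho <= 1.

(* the positive semidefinite square root (chosen; unique when A is psd) *)
Definition sqrtmx (R : realType) (n : nat) (A : 'M[R[i]]_n) : 'M[R[i]]_n :=
  epsilon (inhabits 0) (fun X => psd X /\ X *m X = A).

Definition is_meas (R : realType) (n k : nat) (M : 'I_k -> 'M[R[i]]_n) : Prop :=
  (forall w, psd (M w)) /\ \sum_(w < k) M w = 1%:M.

Definition is_binmeas (R : realType) (n : nat) (B : 'M[R[i]]_n) : Prop :=
  psd B /\ lowner B 1%:M.

Definition Mop (R : realType) (V : finType) (d : V -> nat) (vq : {set V})
    (A : lop R d vq) (X : gop R d) : gop R d :=
  lift (sqrtmx A) *m X *m lift (sqrtmx A).

Definition B0op (R : realType) (V : finType) (d : V -> nat) (vq : {set V})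
    (B : lop R d vq) (X : gop R d) : gop R d := Mop (1%:M - B) X.

Definition B1op (R : realType) (V : finType) (d : V -> nat) (vq : {set V})
    (B : lop R d vq) (X : gop R d) : gop R d := Mop B X.

Definition initop (R : realType) (V : finType) (d : V -> nat) (vq : {set V})
    (X : gop R d) : gop R d :=
  \sum_(x : lidx d vq)
     lift (ketbra R (lzero d vq) x) *m X *m lift (ketbra R x (lzero d vq)).

(* weakest-precondition-like transformer of H.init:
   sum_x |x><0|_vq Q |0><x|_vq *)
Definition initpre (R : realType) (V : finType) (d : V -> nat) (vq : {set V})
    (Q : gop R d) : gop R d :=
  \sum_(x : lidx d vq)
     lift (ketbra R x (lzero d vq)) *m Q *m lift (ketbra R (lzero d vq) x).

(* Programs with holes.  A hole carries a family of specifications           *)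
(* {P l} [] {Q l}, l : Lam, for an arbitrary index type Lam.                 *)
Inductive prog (R : realType) (V : finType) (d : V -> nat) : Type :=
| Skip
| Init (vq : {set V})
| Unit (vq : {set V}) (U : lop R d vq) of U \is unitarymx
| Seq of prog R d & prog R d
| Repeat of nat & prog R d
| Case (vq : {set V}) (k : nat) (M : 'I_k -> lop R d vq) of is_meas M
       & ('I_k -> prog R d)
| While (vq : {set V}) (B : lop R d vq) of is_binmeas B & prog R d
| Hole (Lam : Type) (P Q : Lam -> gop R d).

Arguments Skip {R V d}.
Arguments Init {R V d}.
Arguments Hole {R V d}.

Fixpoint concrete (R : realType) (V : finType) (d : V -> nat) (S : prog R d)
    : Prop :=
  match S with
  | Skip | Init _ | Unit _ _ _ => True
  | Seq S1 S2 => concrete S1 /\ concrete S2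
  | Repeat _ S1 => concrete S1
  | Case _ _ _ _ br => forall w, concrete (br w)
  | While _ _ _ S1 => concrete S1
  | Hole _ _ _ => False
  end.

(* entrywise limit of a sequence of complex matrices (real and imaginary
   parts taken separately); it is the limit whenever the sequence converges *)
Definition mxlim (R : realType) (m n : nat) (u : nat -> 'M[R[i]]_(m, n))
    : 'M[R[i]]_(m, n) :=
  \matrix_(i, j)
    (Complex (limn (fun k => complex.Re (u k i j)))
             (limn (fun k => complex.Im (u k i j)))).

(* denotational semantics (holes are given the zero map; only concrete
   programs are ever interpreted) *)
Fixpoint sem (R : realType) (V : finType) (d : V -> nat) (S : prog R d)
    (rho : gop R d) : gop R d :=
  match S with
  | Skip => rho
  | Init vq => initop vq rho
  | Unit vq U _ => lift U *m rho *m lift (U ^t*)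
  | Seq S1 S2 => sem S2 (sem S1 rho)
  | Repeat N S1 => iter N (sem S1) rho
  | Case vq k M _ br => \sum_(w < k) sem (br w) (Mop (M w) rho)
  | While vq B _ S1 =>
      mxlim (fun n => \sum_(k < n)
               B0op B (iter k (fun X => sem S1 (B1op B X)) rho))
  | Hole _ _ _ => 0
  end.

Definition par_valid (R : realType) (V : finType) (d : V -> nat)
    (P : gop R d) (S : prog R d) (Q : gop R d) : Prop :=
  forall rho : gop R d, pstate rho ->
    \tr (P *m rho) <= \tr (Q *m sem S rho) + \tr rho - \tr (sem S rho).

Inductive refine_par (R : realType) (V : finType) (d : V -> nat)
  : prog R d -> prog R d -> Prop :=
| HP_skip (Lam : Type) (P Q : Lam -> gop R d) :
    (forall l, lowner (P l) (Q l)) ->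
    refine_par (Hole Lam P Q) Skip
| HP_init (Lam : Type) (P Q : Lam -> gop R d) (vq : {set V}) :
    (forall l, lowner (P l) (initpre vq (Q l))) ->
    refine_par (Hole Lam P Q) (Init vq)
| HP_unit (Lam : Type) (P Q : Lam -> gop R d) (vq : {set V}) (U : lop R d vq)
    (hU : U \is unitarymx) :
    (forall l, lowner (P l) (lift (U ^t*) *m Q l *m lift U)) ->
    refine_par (Hole Lam P Q) (Unit hU)
| HP_seq (Lam : Type) (P Q Rm : Lam -> gop R d) :
    (forall l, is_pred (Rm l)) ->
    refine_par (Hole Lam P Q) (Seq (Hole Lam P Rm) (Hole Lam Rm Q))
| HP_split (Lam : Type) (P Q : Lam -> gop R d) (G : finType)
    (P' Q' : Lam * G -> gop R d) :
    (forall lg, is_pred (P' lg) /\ is_pred (Q' lg)) ->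
    (forall l, exists p : G -> R,
        (forall g, 0 <= p g) /\ \sum_g p g = 1 /\
        lowner (P l) (\sum_g (Complex (p g) 0) *: P' (l, g)) /\
        lowner (\sum_g (Complex (p g) 0) *: Q' (l, g)) (Q l)) ->
    refine_par (Hole Lam P Q) (Hole (Lam * G)%type P' Q')
| HP_repeat (Lam : Type) (P Q : Lam -> gop R d) (N : nat)
    (Rm : Lam -> nat -> gop R d) :
    (forall l j, (j <= N)%N -> is_pred (Rm l j)) ->
    (forall l, lowner (P l) (Rm l 0%N)) ->
    (forall l, lowner (Rm l N) (Q l)) ->
    refine_par (Hole Lam P Q)
      (Repeat N (Hole (Lam * 'I_N)%type
                   (fun lj => Rm lj.1 (val lj.2))
                   (fun lj => Rm lj.1 (val lj.2).+1)))
| HP_case (Lam : Type) (P Q : Lam -> gop R d) (vq : {set V}) (k : nat)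
    (M : 'I_k -> lop R d vq) (hM : is_meas M) (Pw : Lam -> 'I_k -> gop R d) :
    (forall l w, is_pred (Pw l w)) ->
    (forall l, lowner (P l) (\sum_(w < k) Mop (M w) (Pw l w))) ->
    refine_par (Hole Lam P Q)
      (Case hM (fun w => Hole Lam (fun l => Pw l w) Q))
| HP_while (Lam : Type) (P Q : Lam -> gop R d) (vq : {set V})
    (B : lop R d vq) (hB : is_binmeas B) (Rm : Lam -> gop R d) :
    (forall l, is_pred (Rm l)) ->
    (forall l, lowner (P l) (B0op B (Q l) + B1op B (Rm l))) ->
    refine_par (Hole Lam P Q)
      (While hB (Hole Lam Rm (fun l => B0op B (Q l) + B1op B (Rm l))))
| C_seqL (S1 S1' S2 : prog R d) :
    refine_par S1 S1' -> refine_par (Seq S1 S2) (Seq S1' S2)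
| C_seqR (S1 S2 S2' : prog R d) :
    refine_par S2 S2' -> refine_par (Seq S1 S2) (Seq S1 S2')
| C_repeat (N : nat) (S1 S1' : prog R d) :
    refine_par S1 S1' -> refine_par (Repeat N S1) (Repeat N S1')
| C_case (vq : {set V}) (k : nat) (M : 'I_k -> lop R d vq) (hM : is_meas M)
    (br : 'I_k -> prog R d) (w : 'I_k) (S' : prog R d) :
    refine_par (br w) S' ->
    refine_par (Case hM br) (Case hM (fun w' => if w' == w then S' else br w'))
| C_while (vq : {set V}) (B : lop R d vq) (hB : is_binmeas B) (S1 S1' : prog R d) :
    refine_par S1 S1' -> refine_par (While hB S1) (While hB S1').

Inductive refine_par_star (R : realType) (V : finType) (d : V -> nat)
  : prog R d -> prog R d -> Prop :=
| rps_refl (S : prog R d) : refine_par_star S S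
| rps_step (S1 S2 S3 : prog R d) :
    refine_par S1 S2 -> refine_par_star S2 S3 -> refine_par_star S1 S3.

Definition hole1 (R : realType) (V : finType) (d : V -> nat) (P Q : gop R d)
  : prog R d := Hole unit (fun _ => P) (fun _ => Q).

(* Main.v *)
Require Import Defs.
From HB Require Import structures.
From mathcomp Require Import all_boot all_order all_algebra.
From mathcomp Require Import complex spectral.
From mathcomp Require Import reals.
From mathcomp Require Import boolp classical_sets filter topology normedtype sequences.
From Stdlib Require Import ClassicalEpsilon.
From mathcomp Require Import ring lra.
Require Import Defs.
Import Order.TTheory GRing.Theory Num.Theory Num.Def.
Import numFieldNormedType.Exports.
Set Implicit Arguments.
Unset Strict Implicit.
Unset Printing Implicit Defensive.
Local Open Scope ring_scope.
Local Open Scope sesquilinear_scope.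

Section Mx.
Variable R : realType.
Local Notation C := (R[i]).

Definition qf m (A : 'M[C]_m) (u : 'cV[C]_m) : C := (u ^t* *m A *m u) ord0 ord0.

Definition ev m (i : 'I_m) : 'cV[C]_m := delta_mx i ord0.

Lemma ev_adj m (i : 'I_m) : (ev i) ^t* = delta_mx ord0 i.
Proof.
apply/matrixP => a b; rewrite !mxE; case: eqP => _; case: eqP => _ /=;
  by rewrite ?conjC0 ?conjC1.
Qed.

Lemma qf_ev m (A : 'M[C]_m) i j :
  ((ev i) ^t* *m A *m ev j) ord0 ord0 = A i j.
Proof. by rewrite ev_adj -rowE -colE !mxE. Qed.

Lemma qf_evM m (A : 'M[C]_m) i j :
  (ev i) ^t* *m A *m ev j = (A i j)%:M.
Proof. by rewrite [LHS]mx11_scalar qf_ev. Qed.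

Lemma adjD m n (A B : 'M[C]_(m, n)) : (A + B) ^t* = A ^t* + B ^t*.
Proof. by apply/matrixP => a b; rewrite !mxE rmorphD. Qed.

Lemma adjZ m n c (A : 'M[C]_(m, n)) : (c *: A) ^t* = c^* *: A ^t*.
Proof. by apply/matrixP => a b; rewrite !mxE rmorphM. Qed.

Lemma adjM m n p (A : 'M[C]_(m, n)) (B : 'M[C]_(n, p)) :
  (A *m B) ^t* = B ^t* *m A ^t*.
Proof. by rewrite trmx_mul map_mxM. Qed.

Lemma adjE m n (M : 'M[C]_(m, n)) i j : (M ^t*) i j = (M j i)^*.
Proof. by rewrite !mxE. Qed.

Lemma qf_pair m (A : 'M[C]_m) i j c :
  qf A (ev i + c *: ev j) = A i i + c * A i j + c^* * A j i + c^* * c * A j j.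
Proof.
rewrite /qf adjD adjZ !mulmxDl !mulmxDr -!scalemxAl -!scalemxAr !qf_evM !mxE /=.
by rewrite !mulrA; ring.
Qed.

Lemma qf_ev1 m (A : 'M[C]_m) i : qf A (ev i) = A i i.
Proof. exact: qf_ev. Qed.

Lemma psd_diag m (A : 'M[C]_m) i : psd A -> 0 <= A i i.
Proof. by move=> h; rewrite -qf_ev1; apply: h. Qed.

Lemma psd_herm m (A : 'M[C]_m) : psd A -> A ^t* = A.
Proof.
move=> h; apply/matrixP => i j; rewrite !mxE.
have hr : forall k, (A k k)^* = A k k.
  by move=> k; apply/CrealP; apply: ger0_real; apply: psd_diag.
have [->|ij] := eqVneq i j; first exact: hr.
have h1 := h (ev j + 1 *: ev i); rewrite -/(qf _ _) qf_pair in h1.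
have h2 := h (ev j + 'i *: ev i); rewrite -/(qf _ _) qf_pair in h2.
move/ger0_real/CrealP: h1; move/ger0_real/CrealP: h2.
rewrite !rmorphD !rmorphM /= !conjCK !hr conjC1 conjCi !mul1r.
set x := (A i j)^*; set y := (A j i)^*; set a := A i j; set b := A j i.
move=> e2 e1.
have i2 : 'i * 'i = -1 :> C by rewrite -expr2 sqrCi.
have key : 2 * (y - a) =
   ((A j j + y + x + A i i) - (A j j + b + a + A i i))
 + 'i * ((A j j + - 'i * y + 'i * x + 'i * - 'i * A i i)
         - (A j j + 'i * b + - 'i * a + - 'i * 'i * A i i))
 - (1 + 'i * 'i) * (x - y - b + a).
  by ring.
move: key; rewrite e1 e2 !subrr mulr0 addr0 i2 subrr mul0r subr0.
move/eqP; rewrite mulf_eq0 pnatr_eq0 /= subr_eq0 => /eqP //.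
Qed.


Lemma entD m n (A B : 'M[C]_(m, n)) i j : (A + B) i j = A i j + B i j.
Proof. by rewrite mxE. Qed.

Lemma qfE m (A : 'M[C]_m) u :
  qf A u = \sum_i \sum_j (u i ord0)^* * A i j * u j ord0.
Proof.
rewrite /qf mxE exchange_big /=; apply: eq_bigr => j _.
rewrite mxE mulr_suml; apply: eq_bigr => i _; by rewrite !mxE.
Qed.

Lemma psd_adjK m (A : 'M[C]_m) : psd A -> A ^t* = A.
Proof. exact: psd_herm. Qed.

Lemma psd_conj m n (K : 'M[C]_(n, m)) (X : 'M[C]_m) :
  psd X -> psd (K *m X *m K ^t*).
Proof.
move=> hX u; have := hX (K ^t* *m u).
by rewrite adjM trmxCK !mulmxA.
Qed.

Lemma psd_conj' m n (K : 'M[C]_(m, n)) (X : 'M[C]_m) :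
  psd X -> psd (K ^t* *m X *m K).
Proof. by move=> /(psd_conj (K ^t*)); rewrite trmxCK. Qed.

Lemma psd0 m : psd (0 : 'M[C]_m).
Proof. by move=> u; rewrite mulmx0 mul0mx mxE. Qed.

Lemma psdD m (A B : 'M[C]_m) : psd A -> psd B -> psd (A + B).
Proof.
move=> hA hB u; rewrite mulmxDr mulmxDl entD; exact: addr_ge0 (hA u) (hB u).
Qed.

Lemma psd_sum m (I : Type) (r : seq I) (P : pred I) (F : I -> 'M[C]_m) :
  (forall i, P i -> psd (F i)) -> psd (\sum_(i <- r | P i) F i).
Proof.
move=> h; apply: (big_ind (@psd R m)); [exact: psd0| exact: psdD| exact: h].
Qed.

Lemma psdZ m (A : 'M[C]_m) c : 0 <= c -> psd A -> psd (c *: A).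
Proof.
move=> hc hA u; rewrite -scalemxAr -scalemxAl mxE; exact: mulr_ge0.
Qed.

Lemma psd_diag_mx m (a : 'rV[C]_m) : (forall i, 0 <= a ord0 i) -> psd (diag_mx a).
Proof.
move=> ha u; rewrite -/(qf _ _) qfE; apply: sumr_ge0 => i _.
rewrite (bigD1 i) //= big1 ?addr0; last first.
  by move=> j /negPf ji; rewrite !mxE eq_sym ji mulr0n mulr0 mul0r.
rewrite !mxE eqxx mulr1n mulrAC; apply: mulr_ge0 => //.
by rewrite mulrC; apply: mul_conjC_ge0.
Qed.

Lemma psd_normal m (A : 'M[C]_m) : psd A -> A \is normalmx.
Proof. by move=> /psd_herm h; apply/normalmxP; rewrite h. Qed.

Lemma sqrt_ex m (A : 'M[C]_m) : psd A -> exists S, psd S /\ S *m S = A.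
Proof.
move=> hA; have /orthomx_spectralP eA := psd_normal hA.
move: eA; set P := spectralmx A; set sp := spectral_diag A => eA.
have Pu : P \is unitarymx := spectral_unitarymx A.
have PPt : P *m P ^t* = 1%:M by apply/unitarymxP.
rewrite invmx_unitary // in eA.
have hD : P *m A *m P ^t* = diag_mx sp.
  by rewrite eA !mulmxA PPt mul1mx -mulmxA PPt mulmx1.
have pD : psd (diag_mx sp) by rewrite -hD; apply: psd_conj.
have sp0 : forall i, 0 <= sp ord0 i.
  by move=> i; have := psd_diag i pD; rewrite mxE eqxx mulr1n.
pose sq := \row_i sqrtC (sp ord0 i).
exists (P ^t* *m diag_mx sq *m P); split.
  have -> : P = P ^t* ^t* by rewrite trmxCK.
  rewrite trmxCK; apply: psd_conj; apply: psd_diag_mx => i.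
  by rewrite mxE sqrtC_ge0.
rewrite -!mulmxA (mulmxA P) PPt mul1mx (mulmxA (diag_mx sq)) mulmx_diag.
have e : \row_j (sq 0 j * sq 0 j) = sp.
  by apply/matrixP => i j; rewrite !mxE -expr2 sqrtCK (ord1 i).
by rewrite e [in RHS]eA mulmxA.
Qed.

Lemma psd_tr m (A : 'M[C]_m) : psd A -> 0 <= \tr A.
Proof. by move=> h; apply: sumr_ge0 => i _; apply: psd_diag. Qed.

Lemma tr_psd_mul m (A B : 'M[C]_m) : psd A -> psd B -> 0 <= \tr (A *m B).
Proof.
move=> hA /sqrt_ex [S [hS <-]].
rewrite mulmxA mxtrace_mulC mulmxA -{1}(psd_herm hS).
by apply: psd_tr; apply: psd_conj'.
Qed.

Lemma lowner_tr m (P Q rho : 'M[C]_m) :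
  lowner P Q -> psd rho -> \tr (P *m rho) <= \tr (Q *m rho).
Proof.
move=> h hr; rewrite -subr_ge0 -linearB /= -mulmxBl; exact: tr_psd_mul.
Qed.

End Mx.
Arguments ev {R m} i.


Section Lift.
Variables (R : realType) (V : finType) (d : V -> nat) (vq : {set V}).
Local Notation C := (R[i]).
Local Notation G := (gidx d).
Local Notation L := (lidx d vq).

Definition agree (x y : G) := [forall v, (v \notin vq) ==> (x v == y v)].

Definition gsel (x : G) (w : L) (v : V) (b : bool) :
    (v \in vq) = b -> 'I_(d v).+1 :=
  if b as b' return (v \in vq) = b' -> 'I_(d v).+1
  then fun h => w (exist _ v h) else fun _ => x v.

Definition glue (x : G) (w : L) : G :=
  finfun (fun v : V => gsel x w (erefl (v \in vq))).

Lemma glue_in x w v (h : v \in vq) : glue x w v = w (exist _ v h).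
Proof.
rewrite ffunE.
suff : forall b (e : (v \in vq) = b), b -> gsel x w e = w (exist _ v h).
  by apply.
move=> b e; case: b e => e //= _; by rewrite (eq_irrelevance e h).
Qed.

Lemma glue_out x w v : v \notin vq -> glue x w v = x v.
Proof.
move=> h; rewrite ffunE.
suff : forall b (e : (v \in vq) = b), ~~ b -> gsel x w e = x v.
  by move=> /(_ _ (erefl (v \in vq))); apply.
by move=> b e; case: b e.
Qed.

Lemma restr_glue x w : restr vq (glue x w) = w.
Proof. by apply/ffunP => -[v h]; rewrite ffunE /= (glue_in _ _ h). Qed.

Lemma agree_glue x w : agree x (glue x w).
Proof. by apply/forallP => v; apply/implyP => h; rewrite glue_out. Qed.

Lemma glue_restr x z : agree x z -> glue x (restr vq z) = z.
Proof.
move=> /forallP a; apply/ffunP => v; case: (boolP (v \in vq)) => h.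
  by rewrite (glue_in _ _ h) ffunE.
by rewrite glue_out //; apply/eqP; apply: (implyP (a v)).
Qed.

Lemma agree_refl x : agree x x.
Proof. by apply/forallP => v; apply/implyP. Qed.

Lemma agree_sym x y : agree x y = agree y x.
Proof.
by apply/forallP/forallP => h v; apply/implyP => hv;
  rewrite eq_sym; apply: (implyP (h v)).
Qed.

Lemma agree_trans x y z : agree x y -> agree y z -> agree x z.
Proof.
move=> /forallP h1 /forallP h2; apply/forallP => v; apply/implyP => hv.
by rewrite (eqP (implyP (h1 v) hv)); apply: (implyP (h2 v)).
Qed.

Lemma agree_restr x y : agree x y -> restr vq x = restr vq y -> x = y.
Proof.
move=> h e; rewrite -(glue_restr h) -e glue_restr //; exact: agree_refl.
Qed.

Lemma liftE (A : lop R d vq) x y :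
  lift A (enum_rank x) (enum_rank y) =
  if agree x y then A (enum_rank (restr vq x)) (enum_rank (restr vq y)) else 0.
Proof. by rewrite mxE !enum_rankK. Qed.

Lemma lift_ext (M N : gop R d) :
  (forall x y : G, M (enum_rank x) (enum_rank y) = N (enum_rank x) (enum_rank y))
  -> M = N.
Proof. by move=> h; apply/matrixP => i j; rewrite -(enum_valK i) -(enum_valK j). Qed.

Lemma sum_agree x (F : L -> C) :
  \sum_(z : G) (if agree x z then F (restr vq z) else 0) = \sum_(w : L) F w.
Proof.
rewrite -big_mkcond /= (reindex (glue x)) /=.
  by apply: eq_big => w; rewrite ?agree_glue ?restr_glue.
exists (restr vq) => z; rewrite inE => h; [exact: restr_glue| exact: glue_restr].
Qed.

Lemma sum_ord_enum (M : nmodType) (T : finType) (F : 'I_#|T| -> M) :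
  \sum_k F k = \sum_(t : T) F (enum_rank t).
Proof. by rewrite (reindex enum_rank) //; apply: onW_bij; apply: enum_rank_bij. Qed.

Lemma lift_mul (A B : lop R d vq) : lift A *m lift B = lift (A *m B).
Proof.
apply: lift_ext => x y; rewrite liftE mxE sum_ord_enum.
have [hxy|hxy] := boolP (agree x y).
  rewrite mxE sum_ord_enum -(sum_agree x).
  apply: eq_bigr => z _; rewrite !liftE.
  case: (boolP (agree x z)) => hxz; last by rewrite mul0r.
  have -> : agree z y by apply: agree_trans hxy; rewrite agree_sym.
  by [].
apply: big1 => z _; rewrite !liftE.
case: (boolP (agree x z)) => hxz; last by rewrite mul0r.
case: (boolP (agree z y)) => hzy; last by rewrite mulr0.
by move: hxy; rewrite (agree_trans hxz hzy).
Qed.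

Lemma lift_add (A B : lop R d vq) : lift (A + B) = lift A + lift B.
Proof.
apply: lift_ext => x y; rewrite entD !liftE; case: agree; rewrite ?addr0 //.
by rewrite mxE.
Qed.

Lemma lift0 : lift (0 : lop R d vq) = 0.
Proof. by apply: lift_ext => x y; rewrite liftE mxE; case: agree; rewrite ?mxE. Qed.

Lemma lift_sum (I : Type) (r : seq I) (P : pred I) (F : I -> lop R d vq) :
  lift (\sum_(i <- r | P i) F i) = \sum_(i <- r | P i) lift (F i).
Proof. exact: (big_morph _ lift_add lift0). Qed.

Lemma lift1 : lift (1%:M : lop R d vq) = 1%:M.
Proof.
apply: lift_ext => x y; rewrite liftE !mxE.
have [->|nxy] := eqVneq x y; first by rewrite agree_refl !eqxx.
rewrite !(inj_eq enum_rank_inj) (negPf nxy).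
case: (boolP (agree x y)) => // hxy.
case: eqP => // e.
by case/eqP: nxy; apply: agree_restr.
Qed.

Lemma lift_adj (A : lop R d vq) : lift (A ^t*) = (lift A) ^t*.
Proof.
apply: lift_ext => x y; rewrite !mxE !enum_rankK /=.
rewrite -/(agree x y) -/(agree y x) agree_sym.
by case: agree; rewrite ?mxE ?conjC0.
Qed.

End Lift.

Section Ops.
Variables (R : realType) (V : finType) (d : V -> nat).
Local Notation C := (R[i]).
Local Notation gop := (gop R d).

Lemma sqrtmx_spec m (A : 'M[C]_m) :
  psd A -> psd (sqrtmx A) /\ sqrtmx A *m sqrtmx A = A.
Proof. by move=> h; rewrite /sqrtmx; apply: (epsilon_spec (inhabits 0) (fun X => psd X /\ X *m X = A)); apply: sqrt_ex. Qed.

Lemma tr_conj m n (Q : 'M[C]_n) (K : 'M[C]_(n, m)) (X : 'M[C]_m) :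
  \tr (Q *m (K *m X *m K ^t*)) = \tr ((K ^t* *m Q *m K) *m X).
Proof.
by rewrite !mulmxA mxtrace_mulC !mulmxA.
Qed.

Lemma tr_conj' m n (Q : 'M[C]_n) (K : 'M[C]_(m, n)) (X : 'M[C]_m) :
  \tr (Q *m (K ^t* *m X *m K)) = \tr ((K *m Q *m K ^t*) *m X).
Proof. by have := tr_conj Q (K ^t*) X; rewrite trmxCK. Qed.

Section MopS.
Variables (vq : {set V}) (A : lop R d vq).
Hypothesis hA : psd A.

Let Ls := lift (sqrtmx A).

Lemma Ls_adj : Ls ^t* = Ls.
Proof. by rewrite /Ls -lift_adj psd_herm //; case: (sqrtmx_spec hA). Qed.

Lemma Ls_sq : Ls *m Ls = lift A.
Proof. by rewrite /Ls lift_mul; case: (sqrtmx_spec hA) => _ ->. Qed.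

Lemma Mop_conj X : Mop A X = Ls *m X *m Ls ^t*.
Proof. by rewrite Ls_adj. Qed.

Lemma Mop_psd X : psd X -> psd (Mop A X).
Proof. by move=> h; rewrite Mop_conj; apply: psd_conj. Qed.

Lemma tr_Mop (Q X : gop) : \tr (Q *m Mop A X) = \tr (Mop A Q *m X).
Proof. by rewrite !Mop_conj tr_conj Ls_adj. Qed.

Lemma tr_Mop1 (X : gop) : \tr (Mop A X) = \tr (lift A *m X).
Proof.
by rewrite -[Mop A X]mul1mx tr_Mop /Mop mulmx1 -/Ls Ls_sq.
Qed.

Lemma MopB (X Y : gop) : Mop A (X - Y) = Mop A X - Mop A Y.
Proof. by rewrite /Mop mulmxBr mulmxBl. Qed.

Lemma MopD (X Y : gop) : Mop A (X + Y) = Mop A X + Mop A Y.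
Proof. by rewrite /Mop mulmxDr mulmxDl. Qed.

Lemma Mop_mono (X Y : gop) : lowner X Y -> lowner (Mop A X) (Mop A Y).
Proof. by move=> h; rewrite /lowner -MopB; apply: Mop_psd. Qed.

Lemma Mop1 : Mop A 1%:M = lift A.
Proof. by rewrite /Mop mulmx1 -/Ls Ls_sq. Qed.

End MopS.

Lemma lowner_refl m (A : 'M[C]_m) : lowner A A.
Proof. by rewrite /lowner subrr; apply: psd0. Qed.

Lemma lowner_trans m (A B D : 'M[C]_m) : lowner A B -> lowner B D -> lowner A D.
Proof.
move=> h1 h2; rewrite /lowner.
have -> : D - A = (D - B) + (B - A) by rewrite addrA subrK.
exact: (psdD h2 h1).
Qed.

Lemma lownerD m (A B A' B' : 'M[C]_m) :
  lowner A B -> lowner A' B' -> lowner (A + A') (B + B').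
Proof.
move=> h1 h2; rewrite /lowner.
have -> : B + B' - (A + A') = (B - A) + (B' - A') by rewrite opprD addrACA.
exact: (psdD h1 h2).
Qed.

Lemma meas_tr vq k (M : 'I_k -> lop R d vq) (X : gop) :
  is_meas M -> \sum_(w < k) \tr (Mop (M w) X) = \tr X.
Proof.
move=> [hM hs].
rewrite (eq_bigr (fun w => \tr (lift (M w) *m X))); last first.
  by move=> w _; rewrite tr_Mop1.
by rewrite -raddf_sum /= -mulmx_suml -lift_sum hs lift1 mul1mx.
Qed.

Lemma meas_pre vq k (M : 'I_k -> lop R d vq) (X Q : gop) :
  is_meas M -> \sum_(w < k) \tr (Q *m Mop (M w) X) = \tr ((\sum_(w < k) Mop (M w) Q) *m X).
Proof.
move=> [hM hs]; rewrite mulmx_suml raddf_sum /=.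
by apply: eq_bigr => w _; rewrite tr_Mop.
Qed.

Lemma binmeas_psd vq (B : lop R d vq) : is_binmeas B -> psd B /\ psd (1%:M - B).
Proof. by case. Qed.

Lemma B0B1_tr vq (B : lop R d vq) (X : gop) : is_binmeas B ->
  \tr (B0op B X) + \tr (B1op B X) = \tr X.
Proof.
move=> /binmeas_psd [h1 h0]; rewrite /B0op /B1op !tr_Mop1 // -mxtraceD -mulmxDl.
by rewrite -lift_add subrK lift1 mul1mx.
Qed.

Lemma B0B1_le1 vq (B : lop R d vq) (Q Rm : gop) : is_binmeas B ->
  lowner Q 1%:M -> lowner Rm 1%:M -> lowner (B0op B Q + B1op B Rm) 1%:M.
Proof.
move=> hB hQ hR; have [h1 h0] := binmeas_psd hB.
have -> : (1%:M : gop) = B0op B 1%:M + B1op B 1%:M.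
  by rewrite /B0op /B1op !Mop1 // -lift_add subrK lift1.
by apply: lownerD; apply: Mop_mono.
Qed.

End Ops.

Section InitUnit.
Variables (R : realType) (V : finType) (d : V -> nat).
Local Notation C := (R[i]).
Local Notation gop := (gop R d).

Lemma delta_adj m n (a : 'I_m) (b : 'I_n) :
  (delta_mx a b : 'M[C]_(m, n)) ^t* = delta_mx b a.
Proof.
apply/matrixP => i j; rewrite !mxE; do 2 case: eqP => _ /=;
  by rewrite ?conjC0 ?conjC1.
Qed.

Variable vq : {set V}.
Let K (x : lidx d vq) : gop := lift (ketbra R (lzero d vq) x).

Lemma K_adj x : (K x) ^t* = lift (ketbra R x (lzero d vq)).
Proof. by rewrite /K -lift_adj /ketbra delta_adj. Qed.

Lemma initopE (X : gop) : initop vq X = \sum_x K x *m X *m (K x) ^t*.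
Proof. by apply: eq_bigr => x _; rewrite K_adj. Qed.

Lemma initpreE (Q : gop) : initpre vq Q = \sum_x (K x) ^t* *m Q *m K x.
Proof. by apply: eq_bigr => x _; rewrite K_adj. Qed.

Lemma K_complete : \sum_x (K x) ^t* *m K x = 1%:M.
Proof.
rewrite (eq_bigr (fun x => lift (delta_mx (enum_rank x) (enum_rank x)))).
  by rewrite -lift_sum -(sum_ord_enum (fun k => delta_mx k k)) -mx1_sum_delta lift1.
by move=> x _; rewrite K_adj /K lift_mul /ketbra mul_delta_mx.
Qed.

Lemma init_psd (X : gop) : psd X -> psd (initop vq X).
Proof. by move=> h; rewrite initopE; apply: psd_sum => x _; apply: psd_conj. Qed.

Lemma init_tr (Q X : gop) : \tr (Q *m initop vq X) = \tr (initpre vq Q *m X).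
Proof.
rewrite initopE initpreE mulmx_sumr mulmx_suml !raddf_sum /=.
by apply: eq_bigr => x _; rewrite tr_conj.
Qed.

Lemma init_tr1 (X : gop) : \tr (initop vq X) = \tr X.
Proof.
rewrite -[initop vq X]mul1mx init_tr initpreE.
by under eq_bigr do rewrite mulmx1; rewrite K_complete mul1mx.
Qed.

Variables (U : lop R d vq) (hU : U \is unitarymx).

Lemma unit_adj_mul : U ^t* *m U = 1%:M.
Proof. by apply: mulmx1C; apply/unitarymxP. Qed.

Lemma unit_psd (X : gop) : psd X -> psd (lift U *m X *m lift (U ^t*)).
Proof. by move=> h; rewrite lift_adj; apply: psd_conj. Qed.

Lemma unit_tr (Q X : gop) :
  \tr (Q *m (lift U *m X *m lift (U ^t*))) = \tr ((lift (U ^t*) *m Q *m lift U) *m X).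
Proof. by rewrite !lift_adj tr_conj. Qed.

Lemma unit_tr1 (X : gop) : \tr (lift U *m X *m lift (U ^t*)) = \tr X.
Proof.
by rewrite -[_ *m _ *m _]mul1mx unit_tr mulmx1 lift_mul unit_adj_mul lift1 mul1mx.
Qed.

End InitUnit.


Lemma cvg_comb3 (R : realType) (u v w : nat -> R) :
  cvgn u -> cvgn v -> cvgn w -> cvgn (fun n => (u n - v n - w n) / 2).
Proof.
move=> hu hv hw.
exact: (is_cvgM (is_cvgB (is_cvgB hu hv) hw) (is_cvg_cst (2^-1 : R))).
Qed.

Lemma cvg_comb3' (R : realType) (u v w : nat -> R) :
  cvgn u -> cvgn v -> cvgn w -> cvgn (fun n => (u n + v n - w n) / 2).
Proof.
move=> hu hv hw.
exact: (is_cvgM (is_cvgB (is_cvgD hu hv) hw) (is_cvg_cst (2^-1 : R))).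
Qed.

Section Lim.
Local Open Scope classical_set_scope.
Local Open Scope ring_scope.
Variable R : realType.
Local Notation C := (R[i]).
Local Notation Re := (@complex.Re R).
Local Notation Im := (@complex.Im R).

Lemma ReD (x y : C) : Re (x + y) = Re x + Re y.
Proof. by case: x; case: y. Qed.
Lemma ImD (x y : C) : Im (x + y) = Im x + Im y.
Proof. by case: x; case: y. Qed.
Lemma ReN (x : C) : Re (- x) = - Re x.
Proof. by case: x. Qed.
Lemma ImN (x : C) : Im (- x) = - Im x.
Proof. by case: x. Qed.
Lemma ReB (x y : C) : Re (x - y) = Re x - Re y.
Proof. by rewrite ReD ReN. Qed.
Lemma ImB (x y : C) : Im (x - y) = Im x - Im y.
Proof. by rewrite ImD ImN. Qed.
Lemma ReM (x y : C) : Re (x * y) = Re x * Re y - Im x * Im y.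
Proof. by case: x => a b; case: y => c e. Qed.
Lemma ImM (x y : C) : Im (x * y) = Re x * Im y + Im x * Re y.
Proof. by case: x => a b; case: y => c e. Qed.
Lemma Re2 (x : C) : Re (2 * x) = 2 * Re x.
Proof. case: x => a b /=; ring. Qed.
Lemma Re0 : Re 0 = 0. Proof. by []. Qed.
Lemma Im0 : Im 0 = 0. Proof. by []. Qed.
Lemma Re_sum (I : Type) (r : seq I) (P : pred I) (F : I -> C) :
  Re (\sum_(i <- r | P i) F i) = \sum_(i <- r | P i) Re (F i).
Proof. exact: (big_morph _ ReD Re0). Qed.
Lemma Im_sum (I : Type) (r : seq I) (P : pred I) (F : I -> C) :
  Im (\sum_(i <- r | P i) F i) = \sum_(i <- r | P i) Im (F i).
Proof. exact: (big_morph _ ImD Im0). Qed.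
Lemma Re_le (x y : C) : x <= y -> Re x <= Re y.
Proof. by rewrite lecE => /andP[]. Qed.
Lemma Im_le (x y : C) : x <= y -> Im x = Im y.
Proof. by rewrite lecE => /andP[/eqP]. Qed.
Lemma ReQ1 (a z b : C) :
  Re (a + 1*z + 1^* * z^* + 1^* * 1 * b) = Re a + 2 * Re z + Re b.
Proof. case: a => a1 a2; case: z => z1 z2; case: b => b1 b2 /=; ring. Qed.
Lemma ReQi (a z b : C) :
  Re (a + 'i*z + 'i^* * z^* + 'i^* * 'i * b) = Re a - 2 * Im z + Re b.
Proof. case: a => a1 a2; case: z => z1 z2; case: b => b1 b2 /=; ring. Qed.

Lemma cvg_sumR (I : finType) (f : I -> nat -> R) (l : I -> R) :
  (forall i, f i n @[n --> \oo] --> l i) ->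
  (\sum_i f i n) @[n --> \oo] --> \sum_i l i.
Proof.
move=> h; apply: (@cvg_big R I +%R 0 predT) => //.
exact: add_continuous.
Qed.

Lemma entB m n (A B : 'M[C]_(m, n)) i j : (A - B) i j = A i j - B i j.
Proof. by rewrite !mxE. Qed.

Lemma qfB m (A B : 'M[C]_m) u : qf (A - B) u = qf A u - qf B u.
Proof. by rewrite /qf mulmxBr mulmxBl entB. Qed.

Variables (m : nat) (T : nat -> 'M[C]_m).
Hypotheses (hT : forall n, psd (T n)) (hinc : forall n, psd (T n.+1 - T n)).
Variable c : R.
Hypothesis hc : forall n, Re (\tr (T n)) <= c.

Lemma qf_mono u : {homo (fun n => Re (qf (T n) u)) : a b / (a <= b)%N >-> a <= b}.
Proof.
apply/nondecreasing_seqP => n /=; apply: Re_le; rewrite -subr_ge0 -qfB.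
exact: hinc.
Qed.

Lemma diag_le n i : Re (T n i i) <= c.
Proof.
apply: le_trans (hc n); apply: Re_le.
rewrite /mxtrace (bigD1 i) //= lerDl; apply: sumr_ge0 => k _; exact: psd_diag.
Qed.

Lemma qf_bound u c0 (i j : 'I_m) :
  (forall n, Re (qf (T n) u) <= Re (qf (T n) u) + Re (qf (T n) c0))  ->
  (forall n, Re (qf (T n) u) + Re (qf (T n) c0) <= 4 * c) ->
  has_ubound (range (fun n => Re (qf (T n) u))).
Proof.
move=> h1 h2; exists (4 * c) => _ [k _ <-]; exact: le_trans (h1 k) (h2 k).
Qed.

Lemma herm_ent n i j : T n j i = (T n i j)^*.
Proof. by have h := psd_herm (hT n); rewrite -{1}h adjE. Qed.

Lemma cvg_qf u : (forall n, Re (qf (T n) u) <= 4 * c) -> cvgn (fun n => Re (qf (T n) u)).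
Proof.
move=> hb; apply: nondecreasing_is_cvgn; first exact: qf_mono.
by exists (4 * c) => _ [k _ <-].
Qed.

Lemma c_ge0 : 0 <= c.
Proof. apply: le_trans (hc 0); have := Re_le (psd_tr (hT 0)); by rewrite Re0. Qed.

Lemma qf_pair_bound (i j : 'I_m) (e : C) : e^* * e = 1 ->
  forall n, Re (qf (T n) (ev i + e *: ev j)) <= 4 * c.
Proof.
move=> he n.
have h0 : 0 <= Re (qf (T n) (ev i - e *: ev j)).
  by have := Re_le (hT n (ev i - e *: ev j)); rewrite Re0.
have hs : qf (T n) (ev i + e *: ev j) + qf (T n) (ev i - e *: ev j)
          = 2 * T n i i + 2 * T n j j.
  rewrite -scaleNr !qf_pair rmorphN /=.
  transitivity (2 * T n i i + 2 * (conjC e * e) * T n j j); first by ring.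
  by rewrite he mulr1.
have := congr1 Re hs; rewrite !ReD !Re2 => hs'.
have := diag_le n i; have := diag_le n j; have := c_ge0.
move: hs'; set a := Re (qf _ _); set b := Re (qf _ _) => hs' *.
lra.
Qed.

Lemma cvg_ent i j : cvgn (fun n => Re (T n i j)) /\ cvgn (fun n => Im (T n i j)).
Proof.
have hRd : forall k, cvgn (fun n => Re (T n k k)).
  move=> k; have h := @cvg_qf (ev k).
  have e : (fun n => Re (qf (T n) (ev k))) = (fun n => Re (T n k k)).
    by apply: funext => n; rewrite qf_ev1.
  rewrite -e; apply: h => n; rewrite qf_ev1; apply: le_trans (diag_le n k) _.
  have := c_ge0; lra.
have [->|ij] := eqVneq i j.
  split => //.
  have -> : (fun n => Im (T n j j)) = (fun n => 0).
    apply: funext => n; have := psd_diag j (hT n); rewrite lecE => /andP[/eqP ->].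
    by [].
  exact: is_cvg_cst.
have e1 : (1 : C)^* * 1 = 1 by rewrite conjC1 mulr1.
have e2 : ('i : C)^* * 'i = 1 by rewrite conjCi mulNr -expr2 sqrCi opprK.
pose u1 := fun n => Re (qf (T n) (ev i + 1 *: ev j)).
pose u2 := fun n => Re (qf (T n) (ev i + 'i *: ev j)).
have h1 : cvgn u1 := cvg_qf (qf_pair_bound i j e1).
have h2 : cvgn u2 := cvg_qf (qf_pair_bound i j e2).
split.
  have -> : (fun n => Re (T n i j)) =
    (fun n => (u1 n - Re (T n i i) - Re (T n j j)) / 2).
    apply: funext => n; rewrite /u1 qf_pair (herm_ent n i j) ReQ1; field; done.
  exact: (cvg_comb3 h1 (hRd i) (hRd j)).
have -> : (fun n => Im (T n i j)) =
  (fun n => (Re (T n i i) + Re (T n j j) - u2 n) / 2).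
  apply: funext => n; rewrite /u2 qf_pair (herm_ent n i j) ReQi; field; done.
exact: (cvg_comb3' (hRd i) (hRd j) h2).
Qed.

Let L := mxlim T.

Lemma L_ent i j : Re (T n i j) @[n --> \oo] --> Re (L i j) /\
                  Im (T n i j) @[n --> \oo] --> Im (L i j).
Proof. by rewrite /L /mxlim !mxE /=; have [] := cvg_ent i j. Qed.

Lemma tr_mulE n (A Y : 'M[C]_n) : \tr (A *m Y) = \sum_i \sum_k A i k * Y k i.
Proof. by apply: eq_bigr => i _; rewrite mxE. Qed.

Lemma cvg_tr Y : Re (\tr (T n *m Y)) @[n --> \oo] --> Re (\tr (L *m Y)) /\
                 Im (\tr (T n *m Y)) @[n --> \oo] --> Im (\tr (L *m Y)).
Proof.
split.
  under eq_fun do rewrite tr_mulE Re_sum.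
  rewrite tr_mulE Re_sum; apply: cvg_sumR => i.
  under eq_fun do rewrite Re_sum.
  rewrite Re_sum; apply: cvg_sumR => k.
  under eq_fun do rewrite ReM.
  rewrite ReM; have [h1 h2] := L_ent i k.
  by apply: cvgB; apply: cvgM => //; apply: cvg_cst.
under eq_fun do rewrite tr_mulE Im_sum.
rewrite tr_mulE Im_sum; apply: cvg_sumR => i.
under eq_fun do rewrite Im_sum.
rewrite Im_sum; apply: cvg_sumR => k.
under eq_fun do rewrite ImM.
rewrite ImM; have [h1 h2] := L_ent i k.
by apply: cvgD; apply: cvgM => //; apply: cvg_cst.
Qed.

Lemma lim_ge Y (a : C) : (forall n, a <= \tr (T n *m Y)) -> a <= \tr (L *m Y).
Proof.
move=> h; have [hr hi] := cvg_tr Y; rewrite lecE; apply/andP; split.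
  apply/eqP; apply/le_anti/andP; split.
    apply: (cvgr_to_le hi); apply: nearW => n; by rewrite (Im_le (h n)).
  apply: (cvgr_to_ge hi); apply: nearW => n; by rewrite (Im_le (h n)).
apply: (cvgr_to_ge hr); apply: nearW => n; exact: Re_le.
Qed.

Lemma lim_le Y (a : C) : (forall n, \tr (T n *m Y) <= a) -> \tr (L *m Y) <= a.
Proof.
move=> h; have [hr hi] := cvg_tr Y; rewrite lecE; apply/andP; split.
  apply/eqP; apply/le_anti/andP; split.
    apply: (cvgr_to_ge hi); apply: nearW => n; by rewrite (Im_le (h n)).
  apply: (cvgr_to_le hi); apply: nearW => n; by rewrite (Im_le (h n)).
apply: (cvgr_to_le hr); apply: nearW => n; exact: Re_le.
Qed.

End Lim.


Lemma tr1x1 (R : realType) (M : 'M[R[i]]_1) : \tr M = M ord0 ord0.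
Proof. by rewrite /mxtrace big_ord1. Qed.

Lemma psd_qf_tr (R : realType) m (A : 'M[R[i]]_m) :
  (forall u : 'cV[R[i]]_m, 0 <= \tr (A *m (u *m u ^t*))) -> psd A.
Proof.
move=> h u; have := h u.
by rewrite mulmxA mxtrace_mulC mulmxA tr1x1.
Qed.

Lemma psd_outer (R : realType) m (u : 'cV[R[i]]_m) : psd (u *m u ^t*).
Proof.
have -> : u *m u ^t* = u *m 1%:M *m u ^t* by rewrite mulmx1.
apply: psd_conj => v; rewrite -/(qf _ _) qfE.
rewrite big_ord1 big_ord1 !mxE eqxx mulr1 mulrC.
exact: mul_conjC_ge0.
Qed.

Section While.
Variables (R : realType) (V : finType) (d : V -> nat) (vq : {set V}).
Local Notation gop := (gop R d).
Variables (B : lop R d vq) (hB : is_binmeas B) (f : gop -> gop).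
Hypothesis hf : forall r, psd r -> psd (f r) /\ \tr (f r) <= \tr r.
Variable rho : gop.
Hypothesis hr : psd rho.

Definition itw k := iter k (fun X => f (B1op B X)) rho.
Definition Tw n := \sum_(k < n) B0op B (itw k).

Lemma itw_psd k : psd (itw k).
Proof.
have [h1 h0] := binmeas_psd hB.
elim: k => [|k IH]; first exact: hr.
rewrite /itw iterS -/(itw k); by case: (hf (Mop_psd h1 IH)).
Qed.

Lemma itw_step k : \tr (itw k.+1) <= \tr (itw k) - \tr (B0op B (itw k)).
Proof.
have [h1 h0] := binmeas_psd hB.
have [_ ht] := hf (Mop_psd h1 (itw_psd k)).
rewrite -(B0B1_tr (itw k) hB) addrAC subrr add0r; exact: ht.
Qed.

Lemma Tw_tr n : \tr (Tw n) + \tr (itw n) <= \tr rho.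
Proof.
elim: n => [|n IH]; first by rewrite /Tw big_ord0 linear0 add0r.
rewrite /Tw big_ord_recr /= -/(Tw n) mxtraceD -addrA.
apply: le_trans IH; rewrite lerD2l.
have := itw_step n; rewrite lerBrDl addrC //.
Qed.

Lemma Tw_psd n : psd (Tw n).
Proof.
have [h1 h0] := binmeas_psd hB.
by apply: psd_sum => k _; apply: Mop_psd => //; apply: itw_psd.
Qed.

Lemma Tw_inc n : psd (Tw n.+1 - Tw n).
Proof.
have [h1 h0] := binmeas_psd hB.
by rewrite /Tw big_ord_recr /= addrAC subrr add0r; apply: Mop_psd => //; apply: itw_psd.
Qed.

Lemma Tw_le n : \tr (Tw n) <= \tr rho.
Proof.
apply: le_trans (Tw_tr n); rewrite lerDl; apply: psd_tr; exact: itw_psd.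
Qed.

Lemma Tw_c n : complex.Re (\tr (Tw n)) <= complex.Re (\tr rho).
Proof. exact: Re_le (Tw_le n). Qed.

Lemma while_lim_ge Y a : (forall n, a <= \tr (Tw n *m Y)) -> a <= \tr (mxlim Tw *m Y).
Proof. exact: (lim_ge Tw_psd Tw_inc Tw_c). Qed.

Lemma while_lim_le Y a : (forall n, \tr (Tw n *m Y) <= a) -> \tr (mxlim Tw *m Y) <= a.
Proof. exact: (lim_le Tw_psd Tw_inc Tw_c). Qed.

Lemma while_psd : psd (mxlim Tw).
Proof.
apply: psd_qf_tr => u; apply: while_lim_ge => n.
apply: tr_psd_mul; [exact: Tw_psd| exact: psd_outer].
Qed.

Lemma while_tr : \tr (mxlim Tw) <= \tr rho.
Proof.
rewrite -[mxlim Tw]mulmx1; apply: while_lim_le => n; rewrite mulmx1; exact: Tw_le.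
Qed.

End While.



Section Sound.
Variables (R : realType) (V : finType) (d : V -> nat).
Local Notation C := (R[i]).
Local Notation gop := (gop R d).
Local Notation prog := (prog R d).

Definition SemOK (S : prog) :=
  forall rho : gop, psd rho -> psd (sem S rho) /\ \tr (sem S rho) <= \tr rho.

Lemma pst_of (rho s : gop) : pstate rho -> psd s -> \tr s <= \tr rho -> pstate s.
Proof. by move=> [_ h1] hs h; split => //; apply: le_trans h h1. Qed.

Lemma sem_ok (S : prog) : concrete S -> SemOK S.
Proof.
elim: S => [|vq|vq U hU|a IHa b IHb|N a IH|vq k M hM br IH|vq B hB a IH|Lam P Q].
- by move=> _ rho h; split; [exact: h|exact: lexx].
- move=> _ rho h; have e : sem (Init vq) rho = initop vq rho := erefl.
  rewrite e; split; first exact: init_psd.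
  by rewrite init_tr1.
- move=> _ rho h.
  have e : sem (Unit hU) rho = lift U *m rho *m lift (U ^t*) := erefl.
  rewrite e; split; first exact: unit_psd.
  by rewrite unit_tr1.
- move=> [ca cb] rho h.
  have e : sem (Seq a b) rho = sem b (sem a rho) := erefl.
  have [h1 t1] := IHa ca rho h; have [h2 t2] := IHb cb _ h1.
  by rewrite e; split => //; apply: le_trans t2 t1.
- move=> ca' rho h; have ca : concrete a := ca'; clear ca'.
  have e : sem (Repeat N a) rho = iter N (sem a) rho := erefl.
  rewrite e; elim: N {e} => [|N [h1 t1]]; first by split; [exact: h|exact: lexx].
  rewrite iterS; have [h2 t2] := IH ca _ h1.
  by split => //; apply: le_trans t2 t1.
- move=> cb rho h; have [hM1 hMs] := hM.
  have e : sem (Case hM br) rho = \sum_(w < k) sem (br w) (Mop (M w) rho) := erefl.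
  rewrite e; split.
    by apply: psd_sum => w _; case: (IH w (cb w) _ (Mop_psd (hM1 w) h)).
  rewrite raddf_sum -(meas_tr rho hM); apply: ler_sum => w _.
  by case: (IH w (cb w) _ (Mop_psd (hM1 w) h)).
- move=> ca rho h.
  have hf := IH ca.
  split; [exact: (while_psd hB hf h)|exact: (while_tr hB hf h)].
- by [].
Qed.
End Sound.


Section PV.
Variables (R : realType) (V : finType) (d : V -> nat).
Local Notation C := (R[i]).
Local Notation gop := (gop R d).
Local Notation prog := (prog R d).

Lemma tr_sum (I : Type) (r : seq I) (Pr : pred I) (F : I -> gop) :
  \tr (\sum_(i <- r | Pr i) F i) = \sum_(i <- r | Pr i) \tr (F i).
Proof. exact: raddf_sum. Qed.

Lemma le_chain (x y z r s t : C) :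
  x <= y + r - s -> y <= z + s - t -> x <= z + r - t.
Proof.
move=> h1 h2; apply: le_trans h1 _.
have -> : z + r - t = (z + s - t) + r - s by ring.
by rewrite lerD2r lerD2r.
Qed.

Lemma pv_skip (P Q : gop) : lowner P Q -> par_valid P Skip Q.
Proof.
move=> h rho [hr _]; have e : sem Skip rho = rho := erefl.
rewrite e addrK; exact: lowner_tr.
Qed.

Lemma pv_init vq (P Q : gop) : lowner P (initpre vq Q) -> par_valid P (Init vq) Q.
Proof.
move=> h rho [hr _]; have e : sem (Init vq) rho = initop vq rho := erefl.
rewrite e init_tr init_tr1 addrK; exact: lowner_tr.
Qed.

Lemma pv_unit vq (U : lop R d vq) (hU : U \is unitarymx) (P Q : gop) :
  lowner P (lift (U ^t*) *m Q *m lift U) -> par_valid P (Unit hU) Q.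
Proof.
move=> h rho [hr _].
have e : sem (Unit hU) rho = lift U *m rho *m lift (U ^t*) := erefl.
rewrite e unit_tr (unit_tr1 hU) -addrA subrr addr0; exact: lowner_tr.
Qed.

Lemma pv_seq (P Rm Q : gop) (a b : prog) :
  SemOK a -> par_valid P a Rm -> par_valid Rm b Q -> par_valid P (Seq a b) Q.
Proof.
move=> ha h1 h2 rho hr.
have e : sem (Seq a b) rho = sem b (sem a rho) := erefl.
have [hs ts] := ha rho hr.1.
rewrite e; exact: le_chain (h1 rho hr) (h2 _ (pst_of hr hs ts)).
Qed.

Lemma cplx_ext (z w : C) : complex.Re z = complex.Re w -> complex.Im z = complex.Im w -> z = w.
Proof. by case: z => a b; case: w => c e /= -> ->. Qed.

Lemma pv_split (P Q : gop) (G : finType) (P' Q' : G -> gop) (p : G -> R) (S : prog) :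
  SemOK S -> (forall g, 0 <= p g) -> \sum_g p g = 1 ->
  lowner P (\sum_g (Complex (p g) 0) *: P' g) ->
  lowner (\sum_g (Complex (p g) 0) *: Q' g) Q ->
  (forall g, par_valid (P' g) S (Q' g)) -> par_valid P S Q.
Proof.
move=> hS hp hs hP hQ hv rho hr.
have [hsr tsr] := hS rho hr.1.
set s := sem S rho in hsr tsr *.
have cp : forall g, 0 <= Complex (p g) 0 :> C.
  by move=> g; rewrite lecE /= eqxx hp.
have c1 : \sum_g Complex (p g) 0 = 1 :> C.
  apply: cplx_ext; first by rewrite Re_sum /= hs.
  by rewrite Im_sum /= big1.
apply: le_trans (lowner_tr hP hr.1) _.
have hm : \tr ((\sum_g Complex (p g) 0 *: P' g) *m rho) <=
   \tr ((\sum_g Complex (p g) 0 *: Q' g) *m s) + \tr rho - \tr s.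
  rewrite !mulmx_suml !tr_sum -addrA.
  have -> : \tr rho - \tr s = \sum_g Complex (p g) 0 * (\tr rho - \tr s).
    by rewrite -mulr_suml c1 mul1r.
  rewrite -big_split /=; apply: ler_sum => g _.
  rewrite -!scalemxAl !linearZ /= -mulrDr; apply: ler_wpM2l => //.
  by rewrite addrA; apply: hv.
apply: le_trans hm _.
by rewrite lerD2r lerD2r; apply: lowner_tr.
Qed.

Lemma pv_repeat (P Q : gop) (N : nat) (Rm : nat -> gop) (body : prog) :
  SemOK body -> (forall j, (j < N)%N -> par_valid (Rm j) body (Rm j.+1)) ->
  lowner P (Rm 0%N) -> lowner (Rm N) Q -> par_valid P (Repeat N body) Q.
Proof.
move=> hb hv hP hQ rho hr.
have e : sem (Repeat N body) rho = iter N (sem body) rho := erefl.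
have key : forall k, (k <= N)%N ->
  [/\ psd (iter k (sem body) rho), \tr (iter k (sem body) rho) <= \tr rho &
   \tr (Rm 0%N *m rho) <= \tr (Rm k *m iter k (sem body) rho) + \tr rho
                          - \tr (iter k (sem body) rho)].
  elim => [|k IH] hk.
    by split; [exact: hr.1|exact: lexx|rewrite /= addrK].
  have [h1 t1 v1] := IH (ltnW hk).
  have [h2 t2] := hb _ h1.
  rewrite iterS; split => //; first exact: le_trans t2 t1.
  exact: le_chain v1 (hv k hk _ (pst_of hr h1 t1)).
have [h1 t1 v1] := key N (leqnn N).
rewrite e; apply: le_trans (lowner_tr hP hr.1) _; apply: le_trans v1 _.
by rewrite lerD2r lerD2r; apply: lowner_tr.
Qed.

End PV.


Section PV2.
Variables (R : realType) (V : finType) (d : V -> nat).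
Local Notation C := (R[i]).
Local Notation gop := (gop R d).
Local Notation prog := (prog R d).

Lemma pv_case vq k (M : 'I_k -> lop R d vq) (hM : is_meas M) (br : 'I_k -> prog)
    (P Q : gop) (Pw : 'I_k -> gop) :
  (forall w, SemOK (br w)) -> (forall w, par_valid (Pw w) (br w) Q) ->
  lowner P (\sum_w Mop (M w) (Pw w)) -> par_valid P (Case hM br) Q.
Proof.
move=> hb hv hP rho hr; have [hM1 hMs] := hM.
have e : sem (Case hM br) rho = \sum_w sem (br w) (Mop (M w) rho) := erefl.
rewrite e; apply: le_trans (lowner_tr hP hr.1) _.
rewrite mulmx_suml tr_sum mulmx_sumr !tr_sum -(meas_tr rho hM).
rewrite -big_split -sumrB /=; apply: ler_sum => w _.
rewrite -(tr_Mop (hM1 w)); apply: hv.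
apply: (pst_of hr (Mop_psd (hM1 w) hr.1)).
rewrite -(meas_tr rho hM) (bigD1 w) //= lerDl; apply: sumr_ge0 => w' _.
by apply: psd_tr; apply: Mop_psd; [exact: hM1|exact: hr.1].
Qed.

Lemma pv_while vq (B : lop R d vq) (hB : is_binmeas B) (body : prog) (P Q Rm : gop) :
  SemOK body -> lowner Q 1%:M -> lowner Rm 1%:M ->
  par_valid Rm body (B0op B Q + B1op B Rm) ->
  lowner P (B0op B Q + B1op B Rm) -> par_valid P (While hB body) Q.
Proof.
move=> hb hQ hR hv hP rho hr.
have hX : lowner (B0op B Q + B1op B Rm) 1%:M := B0B1_le1 hB hQ hR.
move: hv hP hX; set X := B0op B Q + B1op B Rm => hv hP hX.
have [h1 h0] := binmeas_psd hB.
pose f := sem body.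
have e : sem (While hB body) rho = mxlim (Tw B f rho) := erefl.
have key : forall n, \tr (X *m rho) <=
   \tr (Q *m Tw B f rho n) - \tr (Tw B f rho n) + \tr rho
   - \tr (itw B f rho n) + \tr (X *m itw B f rho n).
  elim => [|n IH].
    have -> : itw B f rho 0 = rho := erefl.
    rewrite /Tw big_ord0 mulmx0 !linear0.
    by rewrite le_eqVlt; apply/orP; left; apply/eqP; ring.
  have -> : Tw B f rho n.+1 = Tw B f rho n + B0op B (itw B f rho n).
    by rewrite /Tw big_ord_recr.
  have -> : itw B f rho n.+1 = f (B1op B (itw B f rho n)) := erefl.
  set it := itw B f rho n in IH *.
  have hit : psd it := itw_psd hB hb hr.1 n.
  have tit : \tr it <= \tr rho.
    have h' := Tw_tr hB hb hr.1 n; have h0' := psd_tr (Tw_psd hB hb hr.1 n).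
    apply: le_trans h'; by rewrite lerDr.
  have hp : pstate (B1op B it).
    apply: (pst_of hr (Mop_psd h1 hit)); apply: le_trans tit.
    rewrite -(B0B1_tr it hB) lerDr; apply: psd_tr; exact: Mop_psd.
  have hvn := hv _ hp.
  have hbt := B0B1_tr it hB.
  have hx : \tr (X *m it) = \tr (Q *m B0op B it) + \tr (Rm *m B1op B it).
    by rewrite /X mulmxDl mxtraceD -!tr_Mop.
  move: IH hvn; rewrite hx -hbt mulmxDr !mxtraceD.
  set q := \tr (Q *m Tw B f rho n); set s := \tr (Tw B f rho n).
  set q0 := \tr (Q *m B0op B it); set y := \tr (Rm *m B1op B it).
  set b0 := \tr (B0op B it); set b1 := \tr (B1op B it).
  set x' := \tr (X *m f (B1op B it)); set t' := \tr (f (B1op B it)).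
  set r := \tr rho; set a := \tr (X *m rho).
  move=> IH hvn; apply: le_trans IH _; rewrite -subr_ge0.
  have -> : q + q0 - (s + b0) + r - t' + x' - (q - s + r - (b0 + b1) + (q0 + y))
          = x' + b1 - t' - y by ring.
  by rewrite subr_ge0.
have key2 : forall n, \tr (X *m rho) - \tr rho <= \tr (Tw B f rho n *m (Q - 1%:M)).
  move=> n; have h := key n.
  have hxi : \tr (X *m itw B f rho n) <= \tr (itw B f rho n).
    by have := lowner_tr hX (itw_psd hB hb hr.1 n); rewrite mul1mx.
  have eT : \tr (Tw B f rho n *m (Q - 1%:M)) = \tr (Q *m Tw B f rho n) - \tr (Tw B f rho n).
    by rewrite mulmxBr mulmx1 linearB /= mxtrace_mulC.
  rewrite eT lerBlDr; apply: le_trans h _.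
  move: hxi; set q := \tr (Q *m Tw B f rho n); set s := \tr (Tw B f rho n).
  set x := \tr (X *m itw B f rho n); set t := \tr (itw B f rho n); set r := \tr rho.
  move=> hxi; rewrite -subr_ge0.
  have -> : q - s + r - (q - s + r - t + x) = t - x by ring.
  by rewrite subr_ge0.
have hl := while_lim_ge hB hb hr.1 key2.
have eL : \tr (mxlim (Tw B f rho) *m (Q - 1%:M)) =
   \tr (Q *m mxlim (Tw B f rho)) - \tr (mxlim (Tw B f rho)).
  by rewrite mulmxBr mulmx1 linearB /= mxtrace_mulC.
rewrite eL lerBlDr in hl.
rewrite e; apply: le_trans (lowner_tr hP hr.1) _; apply: le_trans hl _.
by rewrite le_eqVlt; apply/orP; left; apply/eqP; ring.
Qed.

End PV2.


Section Real.
Variables (R : realType) (V : finType) (d : V -> nat).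
Local Notation gop := (gop R d).
Local Notation prog := (prog R d).

Fixpoint wf (S : prog) : Prop :=
  match S with
  | Seq a b => wf a /\ wf b
  | Repeat _ a => wf a
  | Case _ _ _ _ br => forall w, wf (br w)
  | While _ _ _ a => wf a
  | Hole _ _ Q => forall l, lowner (Q l) 1%:M
  | _ => True
  end.

Fixpoint real (S T : prog) {struct S} : Prop :=
  match S with
  | Skip => T = Skip
  | Init vq => T = Init vq
  | Unit vq U hU => T = Unit hU
  | Seq a b => exists a' b', T = Seq a' b' /\ real a a' /\ real b b'
  | Repeat N a => exists a', T = Repeat N a' /\ real a a'
  | Case vq k M hM br => exists br', T = Case hM br' /\ forall w, real (br w) (br' w)
  | While vq B hB a => exists a', T = While hB a' /\ real a a'
  | Hole Lam P Q => concrete T /\ forall l, par_valid (P l) T (Q l)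
  end.

Lemma wf_step (S1 S2 : prog) : refine_par S1 S2 -> wf S1 -> wf S2.
Proof.
elim.
- move=> *; exact: I.
- move=> *; exact: I.
- move=> *; exact: I.
- move=> Lam P Q Rm hR hQ; split; [move=> l; case: (hR l) => _ h; exact: h| exact: hQ].
- move=> Lam P Q G P' Q' hPQ _ _ lg; case: (hPQ lg) => _ [_ h]; exact: h.
- move=> Lam P Q N Rm hR _ _ _ [l j]; have := hR l (val j).+1 (ltn_ord j).
  by case.
- move=> Lam P Q vq k M hM Pw _ _ hQ w; exact: hQ.
- move=> Lam P Q vq B hB Rm hR _ hQ l; apply: (B0B1_le1 hB (hQ l)).
  by case: (hR l).
- move=> S1' S1'' S2' _ IH [h1 h2]; split; [exact: IH h1| exact: h2].
- move=> S1' S2' S2'' _ IH [h1 h2]; split; [exact: h1| exact: IH h2].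
- move=> N S1' S1'' _ IH h; exact: IH h.
- move=> vq k M hM br w S' _ IH h w'.
  change (wf (if w' == w then S' else br w')).
  case: (eqVneq w' w) => [_|_]; [exact: IH (h w)| exact: h w'].
- move=> vq B hB S1' S1'' _ IH h; exact: IH h.
Qed.

Lemma real_refl (S : prog) : concrete S -> real S S.
Proof.
elim: S.
- move=> _; exact: erefl.
- move=> vq _; exact: erefl.
- move=> vq U hU _; exact: erefl.
- move=> a IHa b IHb [ca cb]; exists a, b; split; first exact: erefl.
  split; [exact: IHa| exact: IHb].
- move=> N a IH ca; exists a; split; [exact: erefl| exact: IH].
- move=> vq k M hM br IH cb; exists br; split; first exact: erefl.
  move=> w; exact: IH.
- move=> vq B hB a IH ca; exists a; split; [exact: erefl| exact: IH].
- move=> Lam P Q [].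
Qed.

Lemma real_concrete (S T : prog) : real S T -> concrete T.
Proof.
elim: S T.
- move=> T ->; exact: I.
- move=> vq T ->; exact: I.
- move=> vq U hU T ->; exact: I.
- move=> a IHa b IHb T [a' [b' [-> [h1 h2]]]]; split; [exact: IHa h1| exact: IHb h2].
- move=> N a IH T [a' [-> h]]; exact: IH h.
- move=> vq k M hM br IH T [br' [-> h]] w; exact: IH (h w).
- move=> vq B hB a IH T [a' [-> h]]; exact: IH h.
- move=> Lam P Q T [h _]; exact: h.
Qed.

End Real.


Section Back.
Variables (R : realType) (V : finType) (d : V -> nat).
Local Notation gop := (gop R d).
Local Notation prog := (prog R d).

Lemma real_back (S1 S2 : prog) : refine_par S1 S2 -> wf S1 ->
  forall T, real S2 T -> real S1 T.
Proof.
elim.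
- move=> Lam P Q h _ T ->; split; first exact: I.
  move=> l; exact: pv_skip (h l).
- move=> Lam P Q vq h _ T ->; split; first exact: I.
  move=> l; exact: pv_init (h l).
- move=> Lam P Q vq U hU h _ T ->; split; first exact: I.
  move=> l; exact: pv_unit (h l).
- move=> Lam P Q Rm hR hQ T [a' [b' [-> [[ca h1] [cb h2]]]]].
  split; first by split.
  move=> l; exact: pv_seq (sem_ok ca) (h1 l) (h2 l).
- move=> Lam P Q G P' Q' hPQ hp hQ T [cT h].
  split; first exact: cT.
  move=> l; have [p [hp0 [hp1 [hP hQ']]]] := hp l.
  exact: (pv_split (P' := fun g => P' (l, g)) (Q' := fun g => Q' (l, g))
           (sem_ok cT) hp0 hp1 hP hQ' (fun g => h (l, g))).
- move=> Lam P Q N Rm hR hP hN hQ T [a' [-> [ca h]]].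
  split; first exact: ca.
  move=> l; apply: (pv_repeat (Rm := Rm l) (sem_ok ca) _ (hP l) (hN l)).
  move=> j hj; exact: (h (l, Ordinal hj)).
- move=> Lam P Q vq k M hM Pw hPw hP hQ T [br' [-> h]].
  split; first by move=> w; case: (h w).
  move=> l; apply: (@pv_case R V d vq k M hM br' (P l) (Q l) (fun w => Pw l w)).
  - by move=> w; case: (h w) => cw _; exact: sem_ok cw.
  - by move=> w; case: (h w) => _ hv; exact: hv l.
  - exact: hP l.
- move=> Lam P Q vq B hB Rm hR hP hQ T [a' [-> [ca h]]].
  split; first exact: ca.
  move=> l; apply: (@pv_while R V d vq B hB a' (P l) (Q l) (Rm l)).
  - exact: sem_ok ca.
  - exact: hQ l.
  - by case: (hR l).
  - exact: h l.
  - exact: hP l.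
- move=> S1' S1'' S2' _ IH [w1 w2] T [a' [b' [-> [h1 h2]]]].
  exists a', b'; split; first exact: erefl.
  split; [exact: IH w1 _ h1| exact: h2].
- move=> S1' S2' S2'' _ IH [w1 w2] T [a' [b' [-> [h1 h2]]]].
  exists a', b'; split; first exact: erefl.
  split; [exact: h1| exact: IH w2 _ h2].
- move=> N S1' S1'' _ IH w1 T [a' [-> h1]].
  exists a'; split; [exact: erefl| exact: IH w1 _ h1].
- move=> vq k M hM br w S' _ IH w1 T [br' [-> h1]].
  exists br'; split; first exact: erefl.
  move=> w'; have := h1 w'.
  change (real (if w' == w then S' else br w') (br' w') -> real (br w') (br' w')).
  case: (eqVneq w' w) => [e|_]; last by [].
  move=> hh; rewrite e; apply: IH (w1 w) _ _; move: hh; rewrite e.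
  exact.
- move=> vq B hB S1' S1'' _ IH w1 T [a' [-> h1]].
  exists a'; split; [exact: erefl| exact: IH w1 _ h1].
Qed.

Lemma star_real (S1 S3 : prog) : refine_par_star S1 S3 -> wf S1 -> concrete S3 -> real S1 S3.
Proof.
elim.
- move=> S _ c; exact: real_refl c.
- move=> S1' S2' S3' h _ IH w c.
  exact: real_back h w _ (IH (wf_step h w) c).
Qed.

End Back.

Theorem mainTheorem1 (R : realType) (V : finType) (d : V -> nat)
    (P Q : gop R d) (S : prog R d) :
  is_pred P -> is_pred Q -> concrete S ->
  refine_par_star (hole1 P Q) S ->
  par_valid P S Q.
Proof.
move=> hP [hQ1 hQ2] cS hs.
have w : wf (hole1 P Q) by move=> l; exact: hQ2.
have [_ h] := star_real hs w cS.
exact: h tt.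
Qed.
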